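(* Let $H=(V,E)$ be a 3-uniform hypergraph and let real numbers $\gamma_a$ ($a\in V$) satisfy $\gamma_a+\gamma_b+\gamma_c=-1$ for every edge $\{a,b,c\}\in E$ (e.g. $\gamma_a=\langle\mathbf v_a,\mathbf v_\emptyset\rangle$ for a feasible solution of the SDP: unit vectors $\mathbf v_a$, $a\in V\cup\{\emptyset\}$, with $\mathbf v_a+\mathbf v_b+\mathbf v_c=-\mathbf v_\emptyset$ for every edge). Define $\ell_0=-1$, $u_0=1$ and for $j\ge0$: if $j$ is even, $\ell_{j+1}=\ell_j$, $u_{j+1}=\frac{\ell_j+u_j}{2}$; if $j$ is odd, $\ell_{j+1}=\frac{\ell_j+u_j}{2}$, $u_{j+1}=u_j$; let $I_j=[\ell_j,u_j]$ and $S_{j+1}=\{a\in V:\gamma_a\in I_j\setminus I_{j+1}\}$. Then for every $j\ge0$ and every edge $e\in E$ such that $\gamma_v\in I_j$ for all $v\in e$, we have $|S_{j+1}\cap e|\le1$. *)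

(* Defs.v *)
From HB Require Import structures.
From mathcomp Require Import all_boot all_order all_algebra.
Set Implicit Arguments. Unset Strict Implicit. Unset Printing Implicit Defensive.
Import Order.TTheory GRing.Theory Num.Theory.
Local Open Scope ring_scope.

Fixpoint bounds (R : realFieldType) (j : nat) : R * R :=
  match j with
  | 0 => (-1, 1)
  | j'.+1 =>
      let lu := bounds R j' in
      if odd j' then ((lu.1 + lu.2) / 2, lu.2)
      else (lu.1, (lu.1 + lu.2) / 2)
  end.

Definition ell (R : realFieldType) (j : nat) : R := (bounds R j).1.
Definition uu (R : realFieldType) (j : nat) : R := (bounds R j).2.

Definition inI (R : realFieldType) (j : nat) (x : R) : bool :=
  (ell R j <= x) && (x <= uu R j).

Definition Sset (R : realFieldType) (V : finType) (gamma : V -> R) (j : nat)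
  : {set V} :=
  [set a | inI j (gamma a) && ~~ inI j.+1 (gamma a)].

(* Main.v *)
Require Import Defs.
From mathcomp Require Import all_boot all_order all_algebra.
From mathcomp Require Import lra.
Import Order.TTheory GRing.Theory Num.Theory.
Local Open Scope ring_scope.

Lemma bounds_inv (R : realFieldType) (j : nat) :
  if odd j then ell R j + 2 * uu R j = -1 else 2 * ell R j + uu R j = -1.
Proof.
rewrite /ell /uu; elim: j => [|j IH] /=; first lra.
case: (odd j) IH => /= IH; lra.
Qed.

Lemma boundsS (R : realFieldType) (j : nat) :
  ell R j.+1 = (if odd j then (ell R j + uu R j) / 2 else ell R j) /\
  uu R j.+1 = (if odd j then uu R j else (ell R j + uu R j) / 2).
Proof. by rewrite /ell /uu /=; case: (odd j). Qed.

Theorem lemma3p4 (R : realFieldType) (V : finType) (E : {set {set V}})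
  (gamma : V -> R)
  (H3 : forall e, e \in E -> #|e| = 3%N)
  (Hsum : forall e, e \in E -> \sum_(v in e) gamma v = -1)
  (j : nat) (e : {set V}) (he : e \in E)
  (hI : forall v, v \in e -> inI j (gamma v)) :
  (#|Sset gamma j :&: e| <= 1)%N.
Proof.
rewrite leqNgt; apply/negP => /card_gt1P [x [y [Hx Hy Hxy]]].
move: Hx Hy; rewrite !inE => /andP [/andP [Ix NIx] xe] /andP [/andP [Iy NIy] ye].
have ye' : y \in e :\ x by rewrite !inE eq_sym Hxy.
have : #|e :\ x :\ y| = 1%N.
  by have := H3 e he; rewrite (cardsD1 x e) xe (cardsD1 y (e :\ x)) ye' !add1n => -[].
move=> /eqP/cards1P [z Hz].
have ze : z \in e by move: (set11 z); rewrite -Hz !inE => /andP [_ /andP [_ ->]].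
have := Hsum e he.
rewrite (big_setD1 x xe) (big_setD1 y ye') /= Hz big_set1 => Hs.
have Iz := hI z ze.
have Hinv := bounds_inv R j.
have [HS1 HS2] := boundsS R j.
move: Ix Iy Iz NIx NIy Hinv.
rewrite /inI HS1 HS2.
clear Hz Hxy xe ye ye' ze hI Hsum H3 he HS1 HS2.
case: (odd j) => /= /andP [? ?] /andP [? ?] /andP [? ?];
  rewrite !negb_and -!ltNge => /orP [?|?] /orP [?|?] ?; lra.
Qed.
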